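(* Let $J$ be an $\mathcal{S}$-supported job set and $J_S$ a $(\beta,T)$-good subset of $J$. Let integers $L\ge T$ and $l$ be fixed, let $h$ be a hash function that is $(L,l)$-good for $J_S$, and let $l':=4\beta l$. Then StatelessWeakScheduler, applied to $J$ with parameters $L,l',h$, completes at least a fourth of the jobs of $J_S$ within $2Ll'$ time steps, regardless of the jobs' starting positions and of the choices of which eligible job to work on.
   Context: Job-shop scheduling with unit jobs: machines $M$; jobs with sequences $\mathrm{seq}(j)\in M^*$, unique identifiers $\mathrm{ind}(j)\in I=\{1,\dots,|M|^c\}$ and positions $\mathrm{pos}(j)_t\in\{0,\dots,\mathrm{len}(\mathrm{seq}(j))\}$ (completed at the last value); $\mathrm{que}(m)_t=\{j:\mathrm{seq}(j)_{\mathrm{pos}(j)_t}=m\}$; each step each machine works on at most one job in its queue, which advances one position. $J$ is $\mathcal{S}$-supported if $\mathrm{seq}(j)\in\mathcal{S}$ for all $j\in J$. $C(J)=\max_m\sum_j|\{i:\mathrm{seq}(j)_i=m\}|$, $D(J)=\max_j\mathrm{len}(\mathrm{seq}(j))$. $J_S\subseteq J$ is $(\beta,T)$-good if $|J_S|\ge\frac1\beta|J|$ and $C(J_S)+D(J_S)\le T$. For $h:M^*\times I\to\{0,\dots,L-1\}$, $h(j):=h(\mathrm{seq}(j),\mathrm{ind}(j))$, $\mathrm{virt}(j,i)=h(j)+i$ for $i<\mathrm{len}(\mathrm{seq}(j))$ and $\infty$ otherwise, $\mathrm{virt}(j)_t=\mathrm{virt}(j,\mathrm{pos}(j)_t)$.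 StatelessWeakScheduler$(m,L,l',h,t)$ at subroutine-local time $t$: $T'=\lfloor t/l'\rfloor$, $Q=\{j\in\mathrm{que}(m)_t:\mathrm{virt}(j)_t=T'\}$; if $0<|Q|\le l'$ work on an arbitrary $j\in Q$, else do nothing. Bad pattern for $(M,L,l,J_S)$: sets $B_{T',m}$, $0\le T'<2L$, $m\in M$, of pairs $(j,i)$ with $j\in J_S$ and $\mathrm{seq}(j)_i=m$, each $j$ appearing at most once overall, $|B_{T',m}|\in\{0\}\cup(l,|J_S|]$, $\sum|B_{T',m}|>|J_S|/2$; it occurs for $h$ if $\mathrm{virt}(j,i)=T'$ for all $(j,i)\in B_{T',m}$. $h$ is $(L,l)$-good for $J_S$ if no such bad pattern occurs. *)

(* Defs.v *)
From mathcomp Require Import all_boot.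
Set Implicit Arguments. Unset Strict Implicit. Unset Printing Implicit Defensive.

(* Positions [pos j] range over 0..size (sq j); position = size (sq j) means completed. *)

Section JobShop.
Variables (M J : finType) (sq : J -> seq M) (ind : J -> nat).

Definition valid_ids (c : nat) : Prop :=
  injective ind /\ forall j, 1 <= ind j <= #|M| ^ c.

Definition supported (S : pred (seq M)) : Prop := forall j, S (sq j).

Definition congestion (JS : {set J}) : nat :=
  \max_(m : M) \sum_(j in JS) count (pred1 m) (sq j).

Definition dilation (JS : {set J}) : nat := \max_(j in JS) size (sq j).

Definition good_subset (beta T : nat) (JS : {set J}) : Prop :=
  #|J| <= beta * #|JS| /\ congestion JS + dilation JS <= T.

Definition hj (h : seq M -> nat -> nat) (j : J) : nat := h (sq j) (ind j).

(* virt(j,i) = h(j)+i if i < len(seq j), infinity (None) otherwise *)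
Definition virt (h : seq M -> nat -> nat) (j : J) (i : nat) : option nat :=
  if i < size (sq j) then Some (hj h j + i) else None.

Definition que (pos : J -> nat) (m : M) : {set J} :=
  [set j | onth (sq j) (pos j) == Some m].

Definition Qset (h : seq M -> nat -> nat) (l' t : nat) (pos : J -> nat) (m : M)
  : {set J} :=
  [set j in que pos m | virt h j (pos j) == Some (t %/ l')].

(* One step of StatelessWeakScheduler(m, L, l', h, t) on every machine m:
   [work m] is the job machine m works on (None = do nothing). *)
Definition sws_step (h : seq M -> nat -> nat) (l' t : nat) (pos : J -> nat)
  (work : M -> option J) : Prop :=
  forall m, let Q := Qset h l' t pos m in
  if (0 < #|Q| <= l') then exists2 j, work m = Some j & j \in Q
  else work m = None.

(* A run of StatelessWeakScheduler (subroutine-local time starting at 0):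
   positions [pos t j] at time t, initial positions arbitrary, and at each step
   each job worked on advances by one position. *)
Definition sws_run (h : seq M -> nat -> nat) (l' : nat)
  (pos : nat -> J -> nat) (work : nat -> M -> option J) : Prop :=
  (forall j, pos 0 j <= size (sq j)) /\
  forall t, sws_step h l' t (pos t) (work t) /\
    forall j, pos t.+1 j = pos t j + [exists m, work t m == Some j].

(* Bad pattern for (M, L, l, J_S): sets B_{T',m} (0 <= T' < 2L) of pairs (j,i),
   represented as duplicate-free sequences. *)
Definition bad_pattern (L l : nat) (JS : {set J})
  (B : nat -> M -> seq (J * nat)) : Prop :=
  [/\ (forall T' m, T' < 2 * L -> uniq (B T' m)),
      (forall T' m p, T' < 2 * L -> p \in B T' m ->
          p.1 \in JS /\ onth (sq p.1) p.2 = Some m),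
      (forall T1 m1 p1 T2 m2 p2, T1 < 2 * L -> T2 < 2 * L ->
          p1 \in B T1 m1 -> p2 \in B T2 m2 -> p1.1 = p2.1 ->
          [/\ T1 = T2, m1 = m2 & p1 = p2]),
      (forall T' m, T' < 2 * L ->
          size (B T' m) = 0 \/ (l < size (B T' m) <= #|JS|)) &
      #|JS| < 2 * \sum_(T' < 2 * L) \sum_(m : M) size (B T' m)].

Definition pattern_occurs (L : nat) (h : seq M -> nat -> nat)
  (B : nat -> M -> seq (J * nat)) : Prop :=
  forall T' m p, T' < 2 * L -> p \in B T' m -> virt h p.1 p.2 = Some T'.

Definition good_hash (L l : nat) (JS : {set J}) (h : seq M -> nat -> nat) : Prop :=
  ~ exists B, bad_pattern L l JS B /\ pattern_occurs L h B.

End JobShop.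

(* Main.v *)
Require Import Defs.
From mathcomp Require Import all_boot zify.
Set Implicit Arguments. Unset Strict Implicit. Unset Printing Implicit Defensive.

Section Dyn.
Variables (M J : finType) (sq : J -> seq M) (ind : J -> nat)
  (h : seq M -> nat -> nat) (lp : nat) (pos : nat -> J -> nat)
  (work : nat -> M -> option J).
Hypothesis Hrun : sws_run sq ind h lp pos work.

Definition Sc t v m := [set k | (onth (sq k) (pos t k) == Some m)
   && (virt sq ind h k (pos t k) == Some v)].

Lemma virt_some k i v : virt sq ind h k i = Some v ->
  i < size (sq k) /\ hj sq ind h k + i = v.
Proof. rewrite /virt; case: ifP => // Hi [<-]; by []. Qed.

Lemma pos_step t j : pos t.+1 j = pos t j + [exists m, work t m == Some j].
Proof. by case: Hrun => _ /(_ t) [] _ ->. Qed.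

Lemma worked_inQ t j : [exists m, work t m == Some j] ->
  exists m, (work t m = Some j) /\ j \in Qset sq ind h lp t (pos t) m.
Proof.
case/existsP=> m /eqP Hw; exists m; split => //.
case: Hrun => _ /(_ t) [] /(_ m) /= + _.
case: ifP => _; last by rewrite Hw.
by case=> j' ; rewrite Hw => -[->].
Qed.

Lemma Qset_Sc t m : Qset sq ind h lp t (pos t) m = Sc t (t %/ lp) m.
Proof. by apply/setP => k; rewrite !inE. Qed.

Lemma worked_virt t j : [exists m, work t m == Some j] ->
  exists m, (work t m = Some j) /\ j \in Sc t (t %/ lp) m.
Proof. by move/worked_inQ => [m [H1 H2]]; exists m; rewrite -Qset_Sc. Qed.

Lemma pos_le_size t j : pos t j <= size (sq j).
Proof.
elim: t => [|t IH]; first by case: Hrun.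
rewrite pos_step; case: (boolP [exists m, _]) => Hw; last by rewrite addn0.
case: (worked_virt Hw) => m [_]; rewrite inE => /andP[_ /eqP /virt_some [H _]].
by rewrite addn1.
Qed.

Lemma pos_mono t1 t2 j : t1 <= t2 -> pos t1 j <= pos t2 j.
Proof.
move=> H; rewrite -(subnKC H); elim: (t2 - t1) => [|d IH]; first by rewrite addn0.
by rewrite addnS pos_step (leq_trans IH) ?leq_addr.
Qed.

Lemma no_enter t v m k : v <= t %/ lp -> k \in Sc t.+1 v m -> k \in Sc t v m.
Proof.
move=> Hv; rewrite /Sc !inE pos_step; case: (boolP [exists m, _]) => Hw; first last.
  by rewrite addn0.
case: (worked_virt Hw) => m' [_]; rewrite !inE => /andP[_ /eqP /virt_some [H1 H2]].
by move=> /andP[_ /eqP /virt_some [_ H3]]; lia.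
Qed.

Lemma stay t v m k : lp < #|Sc t v m| -> k \in Sc t v m -> pos t.+1 k = pos t k.
Proof.
move=> Hc Hk; rewrite pos_step; case: (boolP [exists m, _]) => Hw; last by rewrite addn0.
case: (worked_virt Hw) => m' [Hwm]; rewrite !inE => /andP[/eqP Hm' /eqP Hv'].
move: Hk; rewrite inE Hm' Hv' => /andP[/eqP [Em] /eqP [Ev]].
subst m' v.
case: Hrun => _ /(_ t) [] /(_ m) /= + _.
rewrite Qset_Sc. have -> : (#|Sc t (t %/ lp) m| <= lp) = false by apply/negbTE; rewrite -ltnNge.
by rewrite andbF Hwm.
Qed.

Lemma Sc_const t v m : v <= t %/ lp -> lp < #|Sc t v m| -> Sc t.+1 v m = Sc t v m.
Proof.
move=> Hv Hc; apply/setP => k; apply/idP/idP; first exact: no_enter.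
move=> Hk; have E := stay Hc Hk; move: Hk; by rewrite /Sc !inE E.
Qed.


Lemma div_ge t v : 0 < lp -> v * lp <= t -> v <= t %/ lp.
Proof. move=> Hl Ht; by rewrite -(mulnK v Hl) leq_div2r. Qed.

Lemma div_eq v i : i < lp -> (v * lp + i) %/ lp = v.
Proof. move=> Hi; rewrite divnMDl ?divn_small ?addn0 //; lia. Qed.

Lemma not_worked_after H j t : 0 < lp -> pos H j < size (sq j) ->
  (hj sq ind h j + pos H j) * lp <= t < H -> pos t.+1 j = pos t j.
Proof.
move=> Hl HjH /andP[Ht1 Ht2]; have := pos_step t j.
case: (boolP [exists m, _]) => Hw; last by rewrite addn0.
case: (worked_virt Hw) => m [_]; rewrite inE => /andP[_ /eqP /virt_some [_ E]].
have := div_ge Hl Ht1; have := pos_mono j Ht2 => Hm; lia.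
Qed.

Lemma pos_const H j t : 0 < lp -> pos H j < size (sq j) ->
  (hj sq ind h j + pos H j) * lp <= t <= H -> pos t j = pos H j.
Proof.
move=> Hl HjH /andP[Ht1 Ht2].
suff: forall d, d <= H - (hj sq ind h j + pos H j) * lp -> pos (H - d) j = pos H j.
  move=> /(_ (H - t)); have -> : H - (H - t) = t by lia.
  by apply; lia.
elim=> [|d IH] Hd; first by rewrite subn0.
have Ed : H - d = (H - d.+1).+1 by lia.
rewrite -IH; last by lia.
rewrite Ed (not_worked_after (H:=H)) //; lia.
Qed.

Lemma big_cell H j m : 0 < lp -> pos H j < size (sq j) ->
  onth (sq j) (pos H j) = Some m ->
  (hj sq ind h j + pos H j).+1 * lp <= H ->
  lp < #|Sc H (hj sq ind h j + pos H j) m|.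
Proof.
move=> Hl HjH Hm Hle; set v := hj sq ind h j + pos H j.
set t0 := v * lp.
have Hle' : t0 + lp <= H by rewrite /t0 addnC -mulSn.
have Hin : forall t, t0 <= t <= H -> j \in Sc t v m.
  move=> t Ht; rewrite inE (pos_const Hl HjH Ht) Hm eqxx /= /virt HjH.
  by rewrite /v.
have Hnw : forall t, t0 <= t < H -> pos t.+1 j = pos t j.
  by move=> t Ht; apply: (not_worked_after Hl HjH Ht).
have Hbig : lp < #|Sc t0 v m|.
  rewrite ltnNge; apply/negP => Hsm.
  have Hind : forall i, i <= lp -> #|Sc (t0 + i) v m| + i <= #|Sc t0 v m|.
    elim=> [|i IH] Hi; first by rewrite !addn0.
    have {}IH := IH (ltnW Hi).
    set t := t0 + i in IH *.
    have Htv : t %/ lp = v by rewrite /t /t0 div_eq.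
    have Hjt : j \in Sc t v m by apply: Hin; rewrite /t; clearbody t0; lia.
    have Hc : 0 < #|Sc t v m| <= lp.
      apply/andP; split; first by apply/card_gt0P; exists j.
      lia.
    case: Hrun => _ /(_ t) [] /(_ m) /= + _.
    rewrite Qset_Sc Htv Hc => -[k Hwk Hk].
    have Hkw : pos t.+1 k = (pos t k).+1.
      rewrite pos_step; have -> : [exists m, work t m == Some k].
        by apply/existsP; exists m; rewrite Hwk.
      by rewrite addn1.
    have Hkj : k != j.
      apply/eqP => Ekj; subst k; move: Hkw; rewrite Hnw; first lia.
      rewrite /t; clearbody t0; lia.
    have Hsub : Sc t.+1 v m \subset Sc t v m :\ k.
      apply/subsetP => x Hx; rewrite in_setD1.
      have Hx' : x \in Sc t v m by apply: no_enter Hx; rewrite Htv.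
      rewrite Hx' andbT; apply/eqP => Exk; subst x.
      move: Hx Hk; rewrite !inE Hkw => /andP[_ /eqP /virt_some [_ E1]] /andP[_ /eqP /virt_some [_ E2]].
      lia.
    have E := cardsD1 k (Sc t v m); rewrite Hk in E.
    have := subset_leq_card Hsub.
    have -> : t.+1 = t0 + i.+1 by rewrite /t addnS.
    lia.
  have := Hind lp (leqnn _).
  have : j \in Sc (t0 + lp) v m by apply: Hin; clearbody t0; lia.
  move=> Hj; have : 0 < #|Sc (t0 + lp) v m| by apply/card_gt0P; exists j.
  lia.
have Hall : forall d, t0 + d <= H -> Sc (t0 + d) v m = Sc t0 v m.
  elim=> [|d IH] Hd; first by rewrite addn0.
  have IH' : Sc (t0+d) v m = Sc t0 v m by apply: IH; rewrite addnS in Hd; exact: ltnW.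
  rewrite addnS Sc_const; [exact: IH' | apply: div_ge => //; lia | by rewrite IH'].
have := Hall (H - t0); have -> : t0 + (H - t0) = H by rewrite /t0; lia.
by move=> ->; [|rewrite /t0; lia].
Qed.

End Dyn.

Unset Implicit Arguments.
Set Strict Implicit.

Theorem lemma5p19 (M J : finType) (sq : J -> seq M) (ind : J -> nat) (c : nat)
  (S : pred (seq M)) (JS : {set J}) (beta T L l : nat)
  (h : seq M -> nat -> nat)
  (pos : nat -> J -> nat) (work : nat -> M -> option J) :
  @valid_ids M J ind c ->
  @supported M J sq S ->
  0 < beta ->
  @good_subset M J sq beta T JS ->
  T <= L ->
  (forall s i, 1 <= i <= #|M| ^ c -> h s i < L) ->
  @good_hash M J sq ind L l JS h ->
  @sws_run M J sq ind h (4 * beta * l) pos work ->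
  #|JS| <= 4 * #|[set j in JS | pos (2 * L * (4 * beta * l)) j == size (sq j)]|.
Proof.
move=> Hids _ Hb [HJ HT] HTL Hh Hgood Hrun.
set lp := 4 * beta * l in Hrun *.
set H := 2 * L * lp.
have hj_lt : forall j, hj sq ind h j < L by move=> j; apply: Hh; exact: Hids.2.
have size_le : forall j, j \in JS -> size (sq j) <= T.
  move=> j Hj; apply: leq_trans HT; apply: leq_trans (leq_addl _ _).
  by rewrite /dilation; apply: leq_bigmax_cond.
pose key k := (virt sq ind h k (pos H k), onth (sq k) (pos H k)).
pose cellSk x := [set k in JS | key k == x].
pose NCset := [set k | pos H k < size (sq k)].
pose NCs := JS :&: NCset.
pose P := [set k | l < #|cellSk (key k)|].
pose Large := NCs :&: P.
pose K := NCs :\: P.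
set Done := [set j in JS | _].
have E1 : #|NCs| + #|Done| = #|JS|.
  rewrite -(cardsID NCset JS); congr (_ + _); apply: eq_card => x.
  rewrite !inE; have Hle := pos_le_size Hrun H x.
  case: (x \in JS); rewrite /= ?andbF //.
  by rewrite andbT ltn_neqAle Hle andbT negbK.
have E2 : #|Large| + #|K| = #|NCs| by rewrite cardsID.
have keyNC : forall j, pos H j < size (sq j) -> exists m,
    key j = (Some (hj sq ind h j + pos H j), Some m).
  move=> j Hj; case E : (onth (sq j) (pos H j)) => [m|].
    by exists m; rewrite /key /virt Hj E.
  by move: Hj; rewrite -onthTE E.
have vlt : forall j, j \in JS -> pos H j < size (sq j) ->
    (hj sq ind h j + pos H j).+1 <= 2 * L.
  move=> j Hj Hp; have := hj_lt j; have := size_le j Hj; lia.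
have E3 : 4 * #|K| <= #|JS|.
  case: (posnP l) => [l0 | lpos].
    suff -> : K = set0 by rewrite cards0.
    apply/setP => j; rewrite !inE; apply/negP => /andP[Hn /andP[HjS _]].
    move: Hn; rewrite l0 => /negP; apply; apply/card_gt0P; exists j; by rewrite !inE HjS eqxx.
  have lpos' : 0 < lp by rewrite /lp !muln_gt0 Hb lpos.
  have Hbig : forall j, j \in K -> lp < #|[set k | key k == key j]|.
    move=> j; rewrite !inE => /andP[_ /andP[HjS Hp]]; case: (keyNC j Hp) => m Ek.
    have Hm : onth (sq j) (pos H j) = Some m by case: Ek.
    have Hle : (hj sq ind h j + pos H j).+1 * lp <= H.
      by rewrite /H leq_mul2r (vlt j HjS Hp) orbT.
    have HH := @big_cell M J sq ind h lp pos work Hrun H j m lpos' Hp Hm Hle.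
    move: HH.
    congr (_ < _); apply: eq_card => x; rewrite !inE Ek /key xpair_eqE andbC.
    by [].
  have Hsmall : forall k, #|[set j in K | key j == key k]| <= l.
    move=> k; rewrite leqNgt; apply/negP => Hlt.
    have : 0 < #|[set j in K | key j == key k]| by apply: leq_trans Hlt; lia.
    case/card_gt0P => j0 Hj0.
    move: (Hj0); rewrite !inE => /andP[/andP[Hj0P /andP[Hj0S _]] /eqP Ekey].
    move/negP: Hj0P; apply; apply: leq_trans Hlt _.
    apply: subset_leq_card; apply/subsetP => j; rewrite !inE.
    by case/andP=> /and3P[_ -> _] /eqP ->; rewrite Ekey eqxx.
  have Hdc : #|K| * lp.+1 <= #|J| * l.
    rewrite -sum_nat_const -[#|J|]/#|predT| -sum_nat_const.
    apply: (@leq_trans (\sum_(j in K) #|[set k | key k == key j]|)).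
      by apply: leq_sum => j Hj; apply: Hbig.
    have -> : \sum_(j in K) #|[set k | key k == key j]| =
       \sum_(j in K) \sum_(k : J) (if key j == key k then 1 else 0).
      apply: eq_bigr => j _; rewrite -sum1dep_card big_mkcond /=.
      by apply: eq_bigr => k _; rewrite eq_sym.
    rewrite exchange_big /=; apply: leq_sum => k _.
    by rewrite -big_mkcondr sum1dep_card; apply: Hsmall.
  have HJ' : #|J| * l <= beta * #|JS| * l by rewrite leq_mul2r HJ orbT.
  have : (4 * #|K|) * (beta * l) <= #|JS| * (beta * l).
    have := leq_trans Hdc HJ'; rewrite /lp; nia.
  by rewrite leq_pmul2r // muln_gt0 Hb lpos.
rewrite leqNgt; apply/negP => Hlt.
apply: Hgood.
pose B (v : nat) (m : M) := if l < #|cellSk (Some v, Some m)|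
  then [seq (j, pos H j) | j <- enum (cellSk (Some v, Some m))] else [::].
exists B.
have memB : forall v m p, p \in B v m -> exists j, [/\ p = (j, pos H j), j \in JS,
    key j = (Some v, Some m) & l < #|cellSk (Some v, Some m)|].
  move=> v m p; rewrite /B; case: ifP => Hl //; case/mapP => j.
  by rewrite mem_enum inE => /andP[HjS /eqP Ek] ->; exists j; split.
have sizeB : forall v m, size (B v m) = if l < #|cellSk (Some v, Some m)|
    then #|cellSk (Some v, Some m)| else 0.
  by move=> v m; rewrite /B; case: ifP => //; rewrite size_map -cardE.
split; last first.
  move=> T' m p _ /memB [j [-> _ Ek _]] /=; by case: Ek.
split.
- move=> T' m _; rewrite /B; case: ifP => // _; rewrite map_inj_uniq ?enum_uniq //.
  by move=> x y [].
- move=> T' m p _ /memB [j [-> HjS Ek _]]; split => //; by case: Ek.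
- move=> T1 m1 p1 T2 m2 p2 _ _ /memB [j1 [-> _ Ek1 _]] /memB [j2 [-> _ Ek2 _]] /= Ej.
  subst j2; rewrite Ek1 in Ek2; case: Ek2 => -> ->; by split.
- move=> T' m _; rewrite sizeB; case: ifP => Hl; last by left.
  right; rewrite Hl /=; apply: subset_leq_card; apply/subsetP => x.
  by rewrite inE => /andP[].
have Hs : #|Large| <= \sum_(T' < 2 * L) \sum_(m : M) size (B T' m).
  rewrite -sum1_card.
  apply: (@leq_trans (\sum_(j in Large) \sum_(v < 2 * L) \sum_(m : M)
      ((key j == (Some (v : nat), Some m)) : nat))).
    apply: leq_sum => j Hj.
    have HjS : j \in JS by move: Hj; rewrite !inE => /andP[/andP[]].
    have Hp : pos H j < size (sq j) by move: Hj; rewrite !inE => /andP[/andP[_]].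
    case: (keyNC j Hp) => m Ek; have Hv := vlt j HjS Hp.
    rewrite (bigD1 (Ordinal Hv)) //= (bigD1 m) //= Ek eqxx /=.
    by rewrite -addnA leq_addr.
  rewrite exchange_big; apply: leq_sum => v _; rewrite exchange_big.
  apply: leq_sum => m _.
  have -> : \sum_(j in Large) ((key j == (Some (v : nat), Some m)) : nat) =
      #|[set j | (j \in Large) && (key j == (Some (v : nat), Some m))]|.
    rewrite -sum1dep_card big_mkcondr /=; apply: eq_bigr => j _.
    by case: (_ == _).
  rewrite sizeB; case: ifP => Hl.
    apply: subset_leq_card; apply/subsetP => j; rewrite inE => /andP[Hj Ek].
    rewrite inE Ek andbT; by move: Hj; rewrite !inE => /andP[/andP[]].
  rewrite leqn0 cards_eq0; apply/eqP/setP => j; rewrite [in RHS]inE.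
  apply/negP; rewrite inE => /andP[Hj /eqP Ek].
  move: Hj; rewrite inE => /andP[_]; rewrite inE Ek Hl.
  by [].
lia.
Qed.
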